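(* Let $P=\operatorname{conv}(W(\Lambda))$ be a full-dimensional $W$-symmetric polytope, let $F$ be a face of $P$, and let $\alpha\in R$. The following are equivalent: (1) $r_\alpha(F)=F$; (2) the hyperplane $H_\alpha$ passes through the barycenter of $F$; (3) $H_\alpha$ passes through a relative interior point of $F$. If moreover $P$ is non-degenerate, these are also equivalent to: (4) $F\cap H_\alpha\neq\emptyset$; and in that case (when $P$ is non-degenerate and the conditions hold), $\langle \ell_{F'},\alpha\rangle=0$ for every facet $F'$ of $P$ containing $F$.
   Context: $V$ is a real Euclidean space of dimension $n$, $R\subset V$ a reduced root system spanning $V$ (not necessarily crystallographic) with simple system $S=\{\alpha_1,\dots,\alpha_n\}$; $r_\alpha(x)=x-\frac{2\langle x,\alpha\rangle}{\langle \alpha,\alpha\rangle}\alpha$, $H_\alpha$ is the hyperplane fixed pointwise by $r_\alpha$, and $W$ is the group generated by the $r_{\alpha_i}$. $C_S=\{x:\langle x,\alpha_i\rangle\ge0\ \forall i\}$, $\Lambda\subset C_S$ finite. $P$ is non-degenerate if no vertex of $P$ lies on the boundary of $C_S$. $\ell_{F'}$ denotes an outward normal vector of the facet $F'$. *)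

(* Defs.v *)
From HB Require Import structures.
From mathcomp Require Import all_boot all_order all_algebra.
From mathcomp Require Import boolp classical_sets fsbigop reals.
Set Implicit Arguments. Unset Strict Implicit. Unset Printing Implicit Defensive.
Import Order.TTheory GRing.Theory Num.Theory.
Local Open Scope ring_scope.
Local Open Scope classical_set_scope.

Section Defs.
Variables (R : realType) (n : nat).
Notation V := 'rV[R]_n.

Definition dotp (x y : V) : R := \sum_(i < n) x 0 i * y 0 i.

Definition refl (a x : V) : V := x - ((2 * dotp x a) / dotp a a) *: a.

Definition hyperplane (a : V) : set V := [set x | dotp x a = 0].

Definition lincomb k (c : 'I_k -> R) (p : 'I_k -> V) : V := \sum_(i < k) c i *: p i.

(* reduced root system spanning V, not necessarily crystallographic *)
Definition root_system (rs : seq V) : Prop :=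
  [/\ (forall a, a \in rs -> a != 0),
      (forall a b, a \in rs -> b \in rs -> refl a b \in rs),
      (forall a (c : R), a \in rs -> c *: a \in rs -> c = 1 \/ c = -1) &
      (forall v : V, exists k (c : 'I_k -> R) (p : 'I_k -> V),
          (forall i, p i \in rs) /\ v = lincomb c p)].

Definition simple_system (rs : seq V) (S : 'I_n -> V) : Prop :=
  [/\ (forall i, S i \in rs),
      (forall c : 'I_n -> R, lincomb c S = 0 -> forall i, c i = 0) &
      (forall b, b \in rs -> exists c : 'I_n -> R, b = lincomb c S /\
          ((forall i, 0 <= c i) \/ (forall i, c i <= 0)))].

(* W : the group generated by the simple reflections (as maps V -> V);
   since each r_{a_i} is an involution, the monoid it generates is the group. *)
Inductive inW (S : 'I_n -> V) : (V -> V) -> Prop :=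
  | inW_id : inW S id
  | inW_step i w : inW S w -> inW S (refl (S i) \o w).

Definition chamber (S : 'I_n -> V) : set V := [set x | forall i, 0 <= dotp x (S i)].

Definition Worbit (S : 'I_n -> V) (Lam : seq V) : set V :=
  [set x | exists w, inW S w /\ exists l, l \in Lam /\ x = w l].

Definition conv (A : set V) : set V :=
  [set x | exists k (c : 'I_k -> R) (p : 'I_k -> V),
     [/\ (forall i, A (p i)), (forall i, 0 <= c i), \sum_(i < k) c i = 1
       & x = lincomb c p]].

Definition aff (A : set V) : set V :=
  [set x | exists k (c : 'I_k -> R) (p : 'I_k -> V),
     [/\ (forall i, A (p i)), \sum_(i < k) c i = 1 & x = lincomb c p]].

Definition full_dim (P : set V) : Prop :=
  forall c : V, (forall x y, P x -> P y -> dotp c x = dotp c y) -> c = 0.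

(* (nonempty) face of P: intersection with a supporting hyperplane
   (c = 0 gives P itself) *)
Definition face (P F : set V) : Prop :=
  exists (c : V) (b : R), (forall x, P x -> dotp c x <= b) /\
    F = P `&` [set x | dotp c x = b] /\ F !=set0.

Definition vertex (P : set V) (v : V) : Prop := face P [set v].

Definition vertices_of (P F : set V) : set V := [set v | vertex P v /\ F v].

Definition barycenter (P F : set V) : V :=
  (\sum_(v \in vertices_of P F) (1 : R))^-1 *: \sum_(v \in vertices_of P F) v.

Definition relint (F : set V) : set V :=
  [set x | F x /\ exists eps : R, 0 < eps /\
     forall y, aff F y -> dotp (y - x) (y - x) < eps -> F y].

Definition facet (P F : set V) : Prop :=
  face P F /\ F <> P /\ forall G, face P G -> F `<=` G -> G = F \/ G = P.

Definition outward_normal (P F : set V) (l : V) : Prop :=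
  l != 0 /\ exists b : R, (forall x, P x -> dotp l x <= b) /\
    F = P `&` [set x | dotp l x = b].

Definition nondegenerate_poly (S : 'I_n -> V) (P : set V) : Prop :=
  forall v, vertex P v -> chamber S v -> forall i, dotp v (S i) != 0.

End Defs.

(* Main.v *)
Require Import Defs.
From HB Require Import structures.
From mathcomp Require Import all_boot all_order all_algebra.
From mathcomp Require Import boolp classical_sets fsbigop reals cardinality.
From mathcomp Require Import ring lra.
Import Order.TTheory GRing.Theory Num.Theory.
Set Implicit Arguments. Unset Strict Implicit. Unset Printing Implicit Defensive.
Local Open Scope ring_scope.
Local Open Scope classical_set_scope.

Section Basics.
Variables (R : realType) (n : nat).
Notation V := 'rV[R]_n.
Implicit Types x y z a : V.

Lemma dotpC x y : dotp x y = dotp y x.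
Proof. by apply: eq_bigr => i _; rewrite mulrC. Qed.

Lemma dotpDl x y z : dotp (x + y) z = dotp x z + dotp y z.
Proof. by rewrite /dotp -big_split; apply: eq_bigr => i _; rewrite mxE mulrDl. Qed.

Lemma dotpZl (t : R) x y : dotp (t *: x) y = t * dotp x y.
Proof. by rewrite /dotp mulr_sumr; apply: eq_bigr => i _; rewrite mxE mulrA. Qed.

Lemma dotpNl x y : dotp (- x) y = - dotp x y.
Proof. by rewrite -scaleN1r dotpZl mulN1r. Qed.

Lemma dotpBl x y z : dotp (x - y) z = dotp x z - dotp y z.
Proof. by rewrite dotpDl dotpNl. Qed.

Lemma dotp0l x : dotp 0 x = 0.
Proof. by rewrite -(scale0r 0) dotpZl mul0r. Qed.

Lemma dotpDr x y z : dotp x (y + z) = dotp x y + dotp x z.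
Proof. by rewrite dotpC dotpDl !(dotpC x). Qed.
Lemma dotpZr (t : R) x y : dotp x (t *: y) = t * dotp x y.
Proof. by rewrite dotpC dotpZl dotpC. Qed.
Lemma dotpNr x y : dotp x (- y) = - dotp x y.
Proof. by rewrite dotpC dotpNl dotpC. Qed.
Lemma dotpBr x y z : dotp x (y - z) = dotp x y - dotp x z.
Proof. by rewrite dotpDr dotpNr. Qed.
Lemma dotp0r x : dotp x 0 = 0.
Proof. by rewrite dotpC dotp0l. Qed.

Lemma dotp_suml (I : Type) (s : seq I) (P : pred I) (G : I -> V) y :
  dotp (\sum_(i <- s | P i) G i) y = \sum_(i <- s | P i) dotp (G i) y.
Proof.
elim: s => [|i s IH]; first by rewrite !big_nil dotp0l.
by rewrite !big_cons; case: (P i); rewrite ?dotpDl IH.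
Qed.

Lemma dotp_sumr (I : Type) (s : seq I) (P : pred I) (G : I -> V) y :
  dotp y (\sum_(i <- s | P i) G i) = \sum_(i <- s | P i) dotp y (G i).
Proof. by rewrite dotpC dotp_suml; apply: eq_bigr => i _; rewrite dotpC. Qed.

Lemma dotpxx_ge0 x : 0 <= dotp x x.
Proof. by apply: sumr_ge0 => i _; rewrite -expr2 sqr_ge0. Qed.

Lemma dotp_coord x (k : 'I_n) : x 0 k ^+ 2 <= dotp x x.
Proof.
rewrite /dotp (bigD1 k) //= expr2 lerDl; apply: sumr_ge0 => i _.
by rewrite -expr2 sqr_ge0.
Qed.

Lemma dotpxx_eq0 x : dotp x x = 0 -> x = 0.
Proof.
move=> H; apply/rowP => k; rewrite mxE; apply/eqP.
rewrite -sqrf_eq0; apply/eqP/le_anti; rewrite sqr_ge0 andbT -H.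
exact: dotp_coord.
Qed.

Lemma dotpxx_gt0 x : x != 0 -> 0 < dotp x x.
Proof.
move=> x0; rewrite lt_def dotpxx_ge0 andbT; apply/eqP => /dotpxx_eq0 h.
by rewrite h eqxx in x0.
Qed.

Lemma reflE a x : refl a x = x - ((2 * dotp x a) / dotp a a) *: a.
Proof. by []. Qed.

Lemma refl_dot_a a x : a != 0 -> dotp (refl a x) a = - dotp x a.
Proof.
move=> a0; have aa := dotpxx_gt0 a0.
rewrite reflE dotpBl dotpZl mulfVK ?gt_eqF //; ring.
Qed.

Lemma reflK a : a != 0 -> forall x, refl a (refl a x) = x.
Proof.
move=> a0 x; rewrite [in LHS]reflE refl_dot_a // reflE.
by rewrite mulrN mulNr scaleNr opprK subrK.
Qed.

Lemma refl_sym a x y : dotp (refl a x) y = dotp x (refl a y).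
Proof.
rewrite !reflE dotpBl dotpBr dotpZl dotpZr; congr (_ - _).
rewrite (dotpC a y); ring.
Qed.

Lemma refl_iso a x y : a != 0 -> dotp (refl a x) (refl a y) = dotp x y.
Proof. by move=> a0; rewrite refl_sym reflK. Qed.

Lemma reflD a x y : refl a (x + y) = refl a x + refl a y.
Proof.
by rewrite !reflE dotpDl mulrDr mulrDl scalerDl opprD addrACA.
Qed.

Lemma reflZ a (t : R) x : refl a (t *: x) = t *: refl a x.
Proof.
rewrite !reflE dotpZl scalerBr scalerA; congr (_ - _ *: _).
by rewrite !mulrA (mulrC 2 t).
Qed.

Lemma refl0 a : refl a 0 = 0.
Proof. by rewrite reflE dotp0l mulr0 mul0r scale0r subr0. Qed.

Lemma reflB a x y : refl a (x - y) = refl a x - refl a y.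
Proof. by rewrite reflD -scaleN1r reflZ scaleN1r. Qed.

Lemma refl_sum a (I : Type) (s : seq I) (P : pred I) (G : I -> V) :
  refl a (\sum_(i <- s | P i) G i) = \sum_(i <- s | P i) refl a (G i).
Proof.
elim: s => [|i s IH]; first by rewrite !big_nil refl0.
by rewrite !big_cons; case: (P i); rewrite ?reflD IH.
Qed.

Lemma refl_lincomb a k (c : 'I_k -> R) p :
  refl a (lincomb c p) = lincomb c (fun i => refl a (p i)).
Proof. by rewrite /lincomb refl_sum; apply: eq_bigr => i _; rewrite reflZ. Qed.

Lemma reflN a x : refl (- a) x = refl a x.
Proof.
by rewrite !reflE dotpNr dotpNl dotpNr opprK scalerN mulrN mulNr opprK scaleNr.
Qed.

Lemma refl_fix a x : dotp x a = 0 -> refl a x = x.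
Proof. by move=> h; rewrite reflE h mulr0 mul0r scale0r subr0. Qed.

Lemma refl_fixP a x : a != 0 -> refl a x = x -> dotp x a = 0.
Proof.
move=> a0; rewrite reflE => /eqP; rewrite subr_eq addrC -subr_eq subrr eq_sym.
rewrite scaler_eq0 (negbTE a0) orbF mulf_eq0 invr_eq0 (gt_eqF (dotpxx_gt0 a0)) orbF.
by rewrite mulf_eq0 pnatr_eq0 /= => /eqP.
Qed.

Lemma refl_conj s a y : s != 0 -> a != 0 ->
  refl (refl s a) y = refl s (refl a (refl s y)).
Proof.
move=> s0 a0; rewrite [in RHS](reflE a) reflB reflK // reflZ.
rewrite [LHS]reflE refl_iso //; congr (_ - (_ / _) *: _).
by rewrite refl_sym.
Qed.

End Basics.

Section Roots.
Variables (R : realType) (n : nat) (rs : seq 'rV[R]_n) (S : 'I_n -> 'rV[R]_n).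
Hypothesis (Hrs : root_system rs) (HS : simple_system rs S).
Notation V := 'rV[R]_n.

Lemma root_neq0 b : b \in rs -> b != 0.
Proof. by case: Hrs => h _ _ _; apply: h. Qed.

Lemma S_root i : S i \in rs.
Proof. by case: HS => h _ _; apply: h. Qed.

Lemma S_neq0 i : S i != 0.
Proof. exact/root_neq0/S_root. Qed.

Lemma refl_root b c : b \in rs -> c \in rs -> refl b c \in rs.
Proof. by case: Hrs => _ h _ _; apply: h. Qed.

Lemma opp_root b : b \in rs -> - b \in rs.
Proof.
move=> hb; have := refl_root hb hb; rewrite reflE.
rewrite mulfK ?(gt_eqF (dotpxx_gt0 (root_neq0 hb))) //.
by rewrite scaler_nat mulr2n opprD addrA subrr add0r.
Qed.

Lemma inW_comp w1 w2 : inW S w1 -> inW S w2 ->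
  exists w, inW S w /\ forall x, w x = w1 (w2 x).
Proof.
move=> H1 Hw2; elim: H1 => [|i w _ [w' [Hw' Ew']]]; first by exists w2.
by exists (refl (S i) \o w'); split; [constructor | move=> x /=; rewrite Ew'].
Qed.

Lemma inW_inv w : inW S w -> exists w', inW S w' /\ forall x, w' (w x) = x.
Proof.
elim=> [|i w0 _ [w' [Hw' Ew']]]; first by exists id; split => //; constructor.
have Hi : inW S (refl (S i) \o id) by constructor; constructor.
have [u [Hu Eu]] := inW_comp Hw' Hi.
by exists u; split=> // x; rewrite Eu /= reflK ?S_neq0.
Qed.

Lemma inW_dot w b : inW S w -> b \in rs ->
  exists2 b', b' \in rs & forall x, dotp (w x) b = dotp x b'.
Proof.
move=> Hw; elim: Hw b => [|i w0 _ IH] b hb; first by exists b.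
have [b' hb' E] := IH _ (refl_root (S_root i) hb).
by exists b' => // x /=; rewrite refl_sym E.
Qed.

Lemma lincombB (c d : 'I_n -> R) :
  lincomb c S - lincomb d S = lincomb (fun i => c i - d i) S.
Proof.
rewrite /lincomb -sumrB; apply: eq_bigr => i _; by rewrite scalerBl.
Qed.

Lemma lincomb_inj (c d : 'I_n -> R) : lincomb c S = lincomb d S -> c =1 d.
Proof.
move=> E i; apply/eqP; rewrite -subr_eq0; apply/eqP.
case: HS => _ h _; apply: (h (fun i => c i - d i)); by rewrite -lincombB E subrr.
Qed.

Definition coef (b : V) : 'I_n -> R :=
  match pselect (exists c, b = lincomb c S) with
  | left H => projT1 (cid H) | right _ => fun _ => 0 end.

Lemma coefP c : coef (lincomb c S) =1 c.
Proof.
rewrite /coef; case: pselect => [H|[]]; last by exists c.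
by case: (cid H) => d /= E; apply: lincomb_inj.
Qed.

Lemma lincomb_ext (c d : 'I_n -> R) : c =1 d -> lincomb c S = lincomb d S.
Proof. by move=> E; apply: eq_bigr => i _; rewrite E. Qed.

Lemma root_coef b : b \in rs -> b = lincomb (coef b) S /\
  ((forall i, 0 <= coef b i) \/ (forall i, coef b i <= 0)).
Proof.
case: HS => _ _ h /h [c [-> Hc]]; split; first by apply: lincomb_ext => i; rewrite coefP.
by case: Hc => H; [left|right] => i; rewrite coefP.
Qed.

Definition ht (b : V) := \sum_i coef b i.
Definition posr (b : V) := [forall i, 0 <= coef b i].

Lemma count_lt (T : eqType) (pa pb : pred T) (s : seq T) x :
  (forall y, pb y -> pa y) -> x \in s -> pa x -> ~~ pb x ->
  (count pb s < count pa s)%N.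
Proof.
move=> sub; elim: s => [//|y s IH]; rewrite inE => /orP[/eqP <-|xs] pax npbx /=.
  rewrite pax (negbTE npbx) add0n add1n ltnS; exact: sub_count.
have := IH xs pax npbx; case: (boolP (pb y)) => [/sub ->|_] /=.
  by rewrite !add1n ltnS.
by case: (pa y) => /= h; rewrite ?add1n ?add0n // ltnW // ltnS ltnW.
Qed.

Variable Lam : seq V.
Notation O := (Worbit S Lam).

Lemma O_simple i x : O x -> O (refl (S i) x).
Proof.
move=> [w [Hw [l [hl ->]]]]; exists (refl (S i) \o w); split; first by constructor.
by exists l.
Qed.

Lemma caseA a : a \in rs -> (exists i, forall j, j != i -> coef a j = 0) ->
  forall x, O x -> O (refl a x).
Proof.
move=> ha [i Hi] x Ox.
have Ea : a = coef a i *: S i.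
  have [E _] := root_coef ha; rewrite [LHS]E /lincomb (bigD1 i) //= big1 ?addr0 //.
  by move=> j /Hi ->; rewrite scale0r.
have : coef a i *: S i \in rs by rewrite -Ea.
case: Hrs => _ _ red _ /(red _ _ (S_root i)) [] ce; rewrite Ea ce.
  by rewrite scale1r; apply: O_simple.
by rewrite scaleN1r reflN; apply: O_simple.
Qed.

Lemma caseB a : a \in rs -> posr a -> ~ (exists i, forall j, j != i -> coef a j = 0) ->
  exists i b, [/\ b \in rs, posr b, ht b < ht a & a = refl (S i) b].
Proof.
move=> ha /forallP pa HnA; have [Ea _] := root_coef ha.
have [i Hi] : exists i, 0 < dotp a (S i).
  case: (pselect (exists i, 0 < dotp a (S i))) => // H; exfalso.
  have : dotp a a <= 0.
    rewrite [X in dotp X _]Ea /lincomb dotp_suml; apply: sumr_le0 => j _.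
    rewrite dotpZl dotpC; apply: mulr_ge0_le0 => //; rewrite leNgt; apply/negP => h.
    by apply: H; exists j.
  by rewrite leNgt dotpxx_gt0 ?root_neq0.
have [j [ji cj]] : exists j, j != i /\ coef a j != 0.
  case: (pselect (exists j, j != i /\ coef a j != 0)) => // H'; exfalso.
  apply: HnA; exists i => j ji; case: (eqVneq (coef a j) 0) => // cj.
  by exfalso; apply: H'; exists j.
set kk := 2 * dotp a (S i) / dotp (S i) (S i).
have kk0 : 0 < kk by rewrite /kk divr_gt0 ?mulr_gt0 ?dotpxx_gt0 ?S_neq0.
set b := refl (S i) a.
have hb : b \in rs by apply: refl_root => //; apply: S_root.
have Eb : b = lincomb (fun j => coef a j - (j == i)%:R * kk) S.
  rewrite -lincombB -Ea /b reflE; congr (_ - _).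
  rewrite /lincomb (bigD1 i) //= eqxx mul1r big1 ?addr0 // => l /negbTE ->.
  by rewrite mul0r scale0r.
have cb : forall l, coef b l = coef a l - (l == i)%:R * kk by move=> l; rewrite Eb coefP.
have pb : posr b.
  have [_ [Hp|Hn]] := root_coef hb; first by apply/forallP.
  exfalso.
  have := Hn j; rewrite cb (negbTE ji) mul0r subr0 leNgt lt_def cj pa.
  by [].
exists i, b; split => //; last by rewrite /b reflK ?S_neq0.
rewrite /ht; under eq_bigr => l _ do rewrite cb.
rewrite sumrB [X in _ - X](bigD1 i) //= eqxx mul1r [X in _ - (_ + X)]big1 ?addr0; first by rewrite gtrBl.
by move=> l /negbTE ->; rewrite mul0r.
Qed.

Lemma O_pos k a : a \in rs -> posr a ->
  (count (fun b => posr b && (ht b < ht a)%R) rs <= k)%N ->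
  forall x, O x -> O (refl a x).
Proof.
elim: k a => [|k IH] a ha pa hc x Ox;
  (case: (pselect (exists i, forall j, j != i -> coef a j = 0)) => HA;
    [exact: caseA|]);
  have [i [b [hb pb hlt Eab]]] := caseB ha pa HA;
  have hcnt : (count (fun y => posr y && (ht y < ht b)%R) rs <
              count (fun y => posr y && (ht y < ht a)%R) rs)%N by
    apply: (count_lt (x := b)) => //;
    [move=> y /andP[-> /lt_trans]; apply|rewrite pb hlt|rewrite ltxx andbF].
  by move: (leq_trans hcnt hc).
rewrite Eab refl_conj ?S_neq0 ?root_neq0 //; apply: O_simple.
apply: (IH b) => //; last by apply: O_simple.
by rewrite -ltnS (leq_trans hcnt hc).
Qed.

Lemma O_root a : a \in rs -> forall x, O x -> O (refl a x).
Proof.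
move=> ha; have [_ [H|H]] := root_coef ha.
  apply: (O_pos (k := size rs)) => //; [exact/forallP | exact: count_size].
move=> x Ox; rewrite -reflN; apply: (O_pos (k := size rs)); rewrite ?count_size //.
  exact: opp_root.
have [E _] := root_coef ha.
apply/forallP => i; have : - a = lincomb (fun j => - coef a j) S.
  rewrite [in LHS]E /lincomb -sumrN; apply: eq_bigr => j _; by rewrite scaleNr.
by move=> ->; rewrite coefP oppr_ge0.
Qed.

End Roots.

Lemma finite_seq_uniq (T : choiceType) (A : set T) : finite_set A ->
  exists s : seq T, uniq s /\ forall x, A x <-> x \in s.
Proof.
move=> fA; exists (finmap.enum_fset (fset_set A)); split; first exact: finmap.fset_uniq.
move=> x; have := in_fset_set fA x => E.
split => [Ax|]; first by have := E; rewrite mem_set.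
by move=> h; apply: set_mem; rewrite -E.
Qed.

Section Fin.
Variables (R : realType) (n : nat) (rs : seq 'rV[R]_n) (S : 'I_n -> 'rV[R]_n).
Hypothesis (Hrs : root_system rs) (HS : simple_system rs S).
Variable Lam : seq 'rV[R]_n.
Notation V := 'rV[R]_n.
Notation O := (Worbit S Lam).

Lemma span_zero x : (forall b, b \in rs -> dotp x b = 0) -> x = 0.
Proof.
move=> H; apply: dotpxx_eq0; case: Hrs => _ _ _ /(_ x) [k [c [p [Hp E]]]].
rewrite [X in dotp _ X]E /lincomb dotp_sumr big1 // => i _.
by rewrite dotpZr H ?mulr0.
Qed.

Lemma O_finite : finite_set O.
Proof.
pose D := [seq dotp l b | l <- Lam, b <- rs].
pose Y := [set x : V | forall b, b \in rs -> dotp x b \in D].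
apply: (sub_finite_set (B := Y)).
  move=> x [w [Hw [l [hl ->]]]] b hb /=.
  have [b' hb' E] := inW_dot Hrs HS Hw hb; rewrite E.
  by apply/allpairsP; exists (l, b').
pose enc (x : V) : {ffun 'I_(size rs) -> 'I_(size D).+1} :=
  [ffun j : 'I_(size rs) => inord (index (dotp x (nth 0 rs j)) D)].
have inj : {in Y &, injective enc}.
  move=> x y /set_mem Yx /set_mem Yy /ffunP E.
  apply/eqP; rewrite -subr_eq0; apply/eqP/span_zero => b hb.
  rewrite dotpBl; apply/eqP; rewrite subr_eq0; apply/eqP.
  have jb : (index b rs < size rs)%N by rewrite index_mem.
  have := E (Ordinal jb); rewrite !ffunE /= nth_index //.
  move/(congr1 val); rewrite /= !inordK ?ltnS ?index_size // => Eidx.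
  by rewrite -(nth_index 0 (Yx b hb)) Eidx nth_index //; apply: Yy.
rewrite -(eq_finite_set (inj_card_eq inj)); exact: finite_finset.
Qed.

End Fin.

Section SeqLemmas.
Variables (R : realType) (T : eqType).

Lemma seq_max (g : T -> R) (s : seq T) (Pd : pred T) : has Pd s ->
  exists2 x, x \in s & Pd x /\ forall y, y \in s -> Pd y -> g y <= g x.
Proof.
elim: s => [//|z s IH] /=; case: (boolP (Pd z)) => Pz /=.
  case: (boolP (has Pd s)) => [/IH [x xs [Px Hx]]|hn] _.
    case: (leP (g z) (g x)) => h.
      exists x; first by rewrite inE xs orbT.
      split=> // y; rewrite inE => /orP[/eqP ->|ys] Py //; exact: Hx.
    exists z; first by rewrite inE eqxx.
    split=> // y; rewrite inE => /orP[/eqP ->|ys] Py //.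
    by apply: le_trans (Hx _ ys Py) (ltW h).
  exists z; first by rewrite inE eqxx.
  split=> // y; rewrite inE => /orP[/eqP ->|ys] Py //.
  by exfalso; move/negP: hn; apply; apply/hasP; exists y.
move=> /IH [x xs [Px Hx]]; exists x; first by rewrite inE xs orbT.
split=> // y; rewrite inE => /orP[/eqP ->|ys] Py; last exact: Hx.
by rewrite Py in Pz.
Qed.

Lemma seq_gap (h : T -> R) (s : seq T) :
  exists2 g, 0 < g & forall o, o \in s -> 0 < h o -> g <= h o.
Proof.
elim: s => [|z s [g g0 Hg]]; first by exists 1 => //.
case: (ltP 0 (h z)) => hz.
  exists (Num.min g (h z)); first by rewrite lt_min g0 hz.
  move=> o; rewrite inE => /orP[/eqP ->|os] ho; first by rewrite ge_min lexx orbT.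
  by rewrite ge_min Hg.
exists g => // o; rewrite inE => /orP[/eqP ->|os] ho; last exact: Hg.
by move: (lt_le_trans ho hz); rewrite ltxx.
Qed.

Lemma seq_bound (h : T -> R) (s : seq T) :
  exists2 D, 0 < D & forall o, o \in s -> `|h o| <= D.
Proof.
elim: s => [|z s [D D0 HD]]; first by exists 1 => //.
exists (D + `|h z|); first by rewrite ltr_wpDr.
move=> o; rewrite inE => /orP[/eqP ->|os]; first by rewrite lerDr ltW.
by rewrite (le_trans (HD _ os)) // lerDl.
Qed.

End SeqLemmas.

Section Conv.
Variables (R : realType) (n : nat).
Notation V := 'rV[R]_n.
Variable (O : set V).
Notation P := (conv O).

Lemma dotp_lincomb (f : V) k (c : 'I_k -> R) (p : 'I_k -> V) :
  dotp f (lincomb c p) = \sum_i c i * dotp f (p i).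
Proof. by rewrite /lincomb dotp_sumr; apply: eq_bigr => i _; rewrite dotpZr. Qed.

Lemma O_sub_P x : O x -> P x.
Proof.
move=> Ox; exists 1%N, (fun _ => 1), (fun _ => x); split => //.
  by rewrite big_ord1.
by rewrite /lincomb big_ord1 scale1r.
Qed.

Lemma conv_le (f : V) M y : (forall o, O o -> dotp f o <= M) -> P y -> dotp f y <= M.
Proof.
move=> H [k [c [p [Hp Hc Hs ->]]]]; rewrite dotp_lincomb.
rewrite -[M]mul1r -Hs mulr_suml; apply: ler_sum => i _.
by apply: ler_wpM2l => //; apply: H.
Qed.

Lemma conv_eq (f : V) M k (c : 'I_k -> R) (p : 'I_k -> V) :
  (forall o, O o -> dotp f o <= M) -> (forall i, O (p i)) ->
  (forall i, 0 <= c i) -> \sum_i c i = 1 -> dotp f (lincomb c p) = M ->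
  forall i, 0 < c i -> dotp f (p i) = M.
Proof.
move=> H Hp Hc Hs E i ci.
have : \sum_i c i * (M - dotp f (p i)) = 0.
  have -> : \sum_i c i * (M - dotp f (p i)) = M * \sum_i c i - dotp f (lincomb c p).
    rewrite dotp_lincomb mulr_sumr -sumrB.
    by apply: eq_bigr => j _; rewrite mulrBr mulrC.
  by rewrite Hs mulr1 E subrr.
move/eqP; rewrite psumr_eq0; last by move=> j _; rewrite mulr_ge0 // subr_ge0 H.
move/allP/(_ i (mem_index_enum i)); rewrite /= mulf_eq0 (gt_eqF ci) /= subr_eq0.
by move/eqP.
Qed.

Lemma sum1_pos k (c : 'I_k -> R) : (forall i, 0 <= c i) -> \sum_i c i = 1 ->
  exists i, 0 < c i.
Proof.
move=> Hc Hs; case: (pselect (exists i, 0 < c i)) => // H; exfalso.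
have : \sum_i c i = 0.
  apply: big1 => i _; apply/eqP; rewrite eq_le Hc andbT leNgt.
  by apply/negP => h; apply: H; exists i.
by rewrite Hs => /eqP; rewrite oner_eq0.
Qed.

Lemma conv_exists_eq (f : V) M y : (forall o, O o -> dotp f o <= M) -> P y ->
  dotp f y = M -> exists o, O o /\ dotp f o = M.
Proof.
move=> H [k [c [p [Hp Hc Hs ->]]]] E.
have [i ci] := sum1_pos Hc Hs.
by exists (p i); split => //; apply: (conv_eq H Hp Hc Hs E ci).
Qed.

Lemma vertex_O v : vertex P v -> O v.
Proof.
move=> [f [M [Hle [EF _]]]].
have Pv : P v by have : [set v] v by []; rewrite EF => -[].
have Ev : dotp f v = M by have : [set v] v by []; rewrite EF => -[].
have H : forall o, O o -> dotp f o <= M by move=> o /O_sub_P; apply: Hle.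
move: Pv Ev => [k [c [p [Hp Hc Hs Ey]]]] Ev.
have [i ci] := sum1_pos Hc Hs.
have := conv_eq H Hp Hc Hs (etrans (esym (congr1 (dotp f) Ey)) Ev) ci.
move=> Ei; have : [set v] (p i) by rewrite EF; split => //; apply: O_sub_P.
by move=> <-.
Qed.

Variable (Os : seq V).
Hypothesis HOs : forall x, O x <-> x \in Os.

Lemma refine (f : V) M (d : V) : (forall o, o \in Os -> dotp f o <= M) ->
  (exists2 o, o \in Os & dotp f o = M) ->
  exists f' M', [/\ (forall o, o \in Os -> dotp f' o <= M'),
    (exists2 o, o \in Os & dotp f' o = M') &
    (forall o, o \in Os -> dotp f' o = M' -> and (dotp f o = M)
       (forall o', o' \in Os -> dotp f o' = M -> dotp d o' <= dotp d o))].
Proof.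
move=> Hle [o0 o0s E0].
have [x xs [/eqP Px Hx]] := @seq_max R _ (fun o => dotp d o) Os (fun o => dotp f o == M)
  (introT hasP (ex_intro2 _ _ o0 o0s (introT eqP E0))).
set dm := dotp d x.
have [g g0 Hg] := @seq_gap R _ (fun o => M - dotp f o) Os.
have [D D0 HD] := @seq_bound R _ (fun o => dotp d o - dm) Os.
set e := g / (2 * D).
have e0 : 0 < e by rewrite /e divr_gt0 ?mulr_gt0.
have eD : e * D = g / 2.
  by rewrite /e; field; rewrite gt_eqF.
have Ef : forall o, dotp (f + e *: d) o = dotp f o + e * dotp d o.
  by move=> o; rewrite dotpDl dotpZl.
have strict : forall o, o \in Os -> dotp f o != M ->
    dotp (f + e *: d) o < M + e * dm.
  move=> o os ne; have lt : dotp f o < M by rewrite lt_neqAle ne Hle.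
  have g1 : g <= M - dotp f o by apply: Hg => //=; rewrite subr_gt0.
  have g2 : e * (dotp d o - dm) <= g / 2.
    rewrite -eD; apply: ler_wpM2l; first exact: ltW.
    exact: le_trans (ler_norm _) (HD _ os).
  rewrite Ef; have g3 : 0 < g / 2 by rewrite divr_gt0.
  move: g1 g2 g3; rewrite mulrBr; lra.
exists (f + e *: d), (M + e * dm); split.
- move=> o os; case: (eqVneq (dotp f o) M) => [Eo|ne]; last exact/ltW/strict.
  rewrite Ef Eo lerD2l; apply: ler_wpM2l; first exact: ltW.
  by apply: Hx => //; rewrite Eo.
- by exists x => //; rewrite Ef Px.
- move=> o os Eo; case: (eqVneq (dotp f o) M) => [Efo|ne]; last first.
    by have := strict o os ne; rewrite Eo ltxx.
  split=> // o' o's Efo'; move: Eo; rewrite Ef Efo => /addrI/(mulfI (negbT (gt_eqF e0))) ->.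
  by apply: Hx => //; rewrite Efo'.
Qed.

Lemma dotp_e (i : 'I_n) (o : V) : dotp (\row_j (j == i)%:R) o = o 0 i.
Proof.
rewrite /dotp (bigD1 i) //= mxE eqxx mul1r big1 ?addr0 // => j ji.
by rewrite mxE (negbTE ji) mul0r.
Qed.

Lemma vertex_exists (f : V) M : (forall o, o \in Os -> dotp f o <= M) ->
  (exists2 o, o \in Os & dotp f o = M) ->
  exists v, [/\ vertex P v, v \in Os & dotp f v = M].
Proof.
move=> Hle Hex.
have step : forall k, (k <= n)%N -> exists f' M', [/\ (forall o, o \in Os -> dotp f' o <= M'),
    (exists2 o, o \in Os & dotp f' o = M'),
    (forall o, o \in Os -> dotp f' o = M' -> dotp f o = M) &
    (forall o o', o \in Os -> o' \in Os -> dotp f' o = M' -> dotp f' o' = M' ->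
       forall i : 'I_n, (i < k)%N -> o 0 i = o' 0 i)].
  elim=> [|k IH] hk; first by exists f, M; split.
  have [f1 [M1 [H1 H2 H3 H4]]] := IH (ltnW hk).
  have [f2 [M2 [G1 G2 G3]]] := refine (\row_j (j == Ordinal hk)%:R) H1 H2.
  exists f2, M2; split => //.
    by move=> o os /(G3 _ os) [/(H3 _ os)].
  move=> o o' os o's Eo Eo' i; rewrite ltnS leq_eqVlt => /orP[/eqP ik|ik]; last first.
    by apply: H4 => //; [case: (G3 _ os Eo)|case: (G3 _ o's Eo')].
  have -> : i = Ordinal hk by apply: val_inj.
  have [E1 M1o] := G3 _ os Eo; have [E1' M1o'] := G3 _ o's Eo'.
  have := M1o _ o's E1'; have := M1o' _ os E1; rewrite !dotp_e => a b.
  by apply/eqP; rewrite eq_le a b.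
have [f' [M' [H1 [v vs Ev] H3 H4]]] := step n (leqnn n).
have Hv : forall o, o \in Os -> dotp f' o = M' -> o = v.
  by move=> o os Eo; apply/rowP => i; apply: H4.
exists v; split => //; last exact: H3.
have HO : forall o, O o -> dotp f' o <= M' by move=> o /HOs; apply: H1.
exists f', M'; split; first by move=> y; apply: conv_le.
split; last by exists v.
apply/seteqP; split => y /=.
  by move=> ->; split => //; apply: O_sub_P; apply/HOs.
move=> [[k [c [p [Hp Hc Hs Ey]]]] Efy].
have Ep : forall i, 0 < c i -> p i = v.
  move=> i ci; apply: Hv; first exact/HOs.
  by apply: (conv_eq HO Hp Hc Hs _ ci); rewrite -Ey.
rewrite Ey /lincomb (eq_bigr (fun i => c i *: v)); last first.
  move=> i _; case: (eqVneq (c i) 0) => [->|ne]; first by rewrite !scale0r.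
  by rewrite Ep // lt_def ne Hc.
by rewrite -scaler_suml Hs scale1r.
Qed.

Lemma vertex_min (f : V) M (g : V) : (forall o, o \in Os -> dotp f o <= M) ->
  (exists2 o, o \in Os & dotp f o = M) ->
  exists v, [/\ vertex P v, v \in Os, dotp f v = M &
    forall o, o \in Os -> dotp f o = M -> dotp g v <= dotp g o].
Proof.
move=> H1 H2; have [f' [M' [G1 G2 G3]]] := refine (- g) H1 H2.
have [v [Vv vs Ev]] := vertex_exists G1 G2.
have [E1 E2] := G3 _ vs Ev.
exists v; split => // o os Eo; have := E2 _ os Eo; by rewrite !dotpNl lerN2.
Qed.

End Conv.

Section Relint.
Variables (R : realType) (n : nat).
Notation V := 'rV[R]_n.
Variable (O : set V).
Notation P := (conv O).
Variable (Os : seq V).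
Hypothesis HOs : forall x, O x <-> x \in Os.

Lemma relint_bary (c : V) (b0 : R) (F : set V) :
  (forall y, P y -> dotp c y <= b0) -> F = P `&` [set y | dotp c y = b0] ->
  (0 < size [seq o <- Os | dotp c o == b0])%N ->
  relint F ((size [seq o <- Os | dotp c o == b0])%:R^-1 *:
              \sum_(t <- [seq o <- Os | dotp c o == b0]) t).
Proof.
move=> Hle EF; set T := [seq o <- Os | dotp c o == b0] => NT.
set N := size T; set beta := _ *: _.
have N0 : (N%:R : R) != 0 by rewrite pnatr_eq0 -lt0n.
have Tmem : forall j : 'I_N, O (nth 0 T j) /\ dotp c (nth 0 T j) = b0.
  move=> j; have := mem_nth 0 (ltn_ord j); rewrite mem_filter => /andP[/eqP E /HOs h].
  by [].
have convT : forall mu : 'I_N -> R, (forall j, 0 <= mu j) -> \sum_j mu j = 1 ->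
    F (\sum_j mu j *: nth 0 T j).
  move=> mu mu0 mu1; rewrite EF; split.
    by exists N, mu, (fun j => nth 0 T j); split => // j; case: (Tmem j).
  rewrite /= dotp_sumr (eq_bigr (fun j => mu j * b0)); last first.
    by move=> j _; rewrite dotpZr; case: (Tmem j) => _ ->.
  by rewrite -mulr_suml mu1 mul1r.
have Eb : beta = \sum_(j < N) N%:R^-1 *: nth 0 T j.
  by rewrite /beta (big_nth 0) big_mkord scaler_sumr.
have Fb : F beta.
  rewrite Eb; apply: convT => [j|]; first by rewrite invr_ge0 ler0n.
  by rewrite sumr_const card_ord -(mulr_natr (N%:R^-1)) mulVf.
have HO : forall o, O o -> dotp c o <= b0 by move=> o /O_sub_P; apply: Hle.
pose M := \matrix_(j < N) (nth 0 T j - beta).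
have Tsub : forall q, O q -> dotp c q = b0 -> (q - beta <= M)%MS.
  move=> q /HOs qs Eq; have qT : q \in T by rewrite mem_filter Eq eqxx.
  have jq : (index q T < N)%N by rewrite index_mem.
  have := row_sub (Ordinal jq) M; rewrite rowK /= nth_index //.
have Fsub : forall p, F p -> (p - beta <= M)%MS.
  move=> p; rewrite EF => -[[k [l [q [Hq Hl Hs Ep]]]] Ecp].
  have -> : p - beta = \sum_i l i *: (q i - beta).
    rewrite Ep /lincomb -[X in _ - X]scale1r -Hs scaler_suml -sumrB.
    by apply: eq_bigr => i _; rewrite scalerBr.
  apply: summx_sub => i _; case: (eqVneq (l i) 0) => [->|li]; first by rewrite scale0r sub0mx.
  apply: scalemx_sub; apply: Tsub => //.
  by apply: (conv_eq HO Hq Hl Hs _); rewrite ?lt_def ?li ?Hl // -Ep.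
have affsub : forall y, aff F y -> (y - beta <= M)%MS.
  move=> y [k [l [q [Hq Hs Ey]]]].
  have -> : y - beta = \sum_i l i *: (q i - beta).
    rewrite Ey /lincomb -[X in _ - X]scale1r -Hs scaler_suml -sumrB.
    by apply: eq_bigr => i _; rewrite scalerBr.
  by apply: summx_sub => i _; apply: scalemx_sub; apply: Fsub.
pose Q := pinvmx M.
pose B := 1 + \sum_k \sum_j `|Q k j|.
have B1 : 1 <= B.
  by rewrite lerDl; apply: sumr_ge0 => k _; apply: sumr_ge0 => j _.
have B0 : 0 < B by apply: lt_le_trans B1.
have Nr0 : 0 < (N%:R : R) by rewrite ltr0n.
pose dl := (2 * N%:R * B)^-1.
have dl0 : 0 < dl by rewrite invr_gt0 !mulr_gt0.
have dlB : dl * B = (2 * N%:R)^-1.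
  by rewrite /dl; field; apply/andP; split; rewrite gt_eqF.
split => //; exists (dl ^+ 2); split; first by rewrite exprn_gt0.
move=> y Ay Hd.
set v := y - beta.
have Ev : v = (v *m Q) *m M by rewrite mulmxKpV // affsub.
set rho := v *m Q.
have hv : forall k, `|v 0 k| < dl.
  move=> k; rewrite ltNge; apply/negP => h.
  have h2 : dl ^+ 2 <= `|v 0 k| ^+ 2.
    by rewrite !expr2; apply: ler_pM => //; exact: ltW.
  rewrite real_normK ?num_real // in h2.
  have := le_lt_trans (le_trans h2 (dotp_coord v k)) Hd.
  by rewrite ltxx.
have hrho : forall j, `|rho 0 j| <= (2 * N%:R)^-1.
  move=> j; rewrite -dlB /rho mxE.
  apply: le_trans (ler_norm_sum _ _ _) _.
  apply: (@le_trans _ _ (\sum_k0 dl * `|Q k0 j|)).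
    apply: ler_sum => k0 _; rewrite normrM; apply: ler_wpM2r => //.
    exact: ltW (hv k0).
  rewrite -mulr_sumr; apply: ler_wpM2l; first exact: ltW.
  have H : \sum_k0 `|Q k0 j| <= \sum_k \sum_j `|Q k j|.
    apply: ler_sum => k0 _; rewrite [X in _ <= X](bigD1 j) //= lerDl.
    by apply: sumr_ge0.
  by apply: le_trans H _; rewrite /B lerDr.
set s := \sum_j rho 0 j.
have hs : s <= 2^-1.
  apply: le_trans (ler_norm _) _; apply: le_trans (ler_norm_sum _ _ _) _.
  apply: (@le_trans _ _ (\sum_(j < N) (2 * N%:R)^-1)); first by apply: ler_sum.
  rewrite sumr_const card_ord -(mulr_natr ((2 * N%:R)^-1)).
  rewrite invfM -mulrA mulVf ?mulr1 //; exact: gt_eqF.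
pose mu j := (1 - s) / N%:R + rho 0 j.
have mu0 : forall j, 0 <= mu j.
  move=> j; rewrite /mu; have := hrho j; have := ler_norm (- rho 0 j).
  rewrite normrN => h1 h2.
  have h3 : (2 * N%:R)^-1 <= (1 - s) / N%:R.
    rewrite invfM; apply: ler_wpM2r; first by rewrite invr_ge0 ltW.
    lra.
  lra.
have mu1 : \sum_j mu j = 1.
  rewrite /mu big_split /= sumr_const card_ord -/s -(mulr_natr ((1 - s) / N%:R)).
  by rewrite -mulrA mulVf // mulr1 subrK.
have Ey : y = \sum_j mu j *: nth 0 T j.
  have -> : y = beta + v by rewrite /v addrC subrK.
  rewrite Ev mulmx_sum_row (eq_bigr (fun j => rho 0 j *: (nth 0 T j - beta))); last first.
    by move=> j _; rewrite rowK.
  rewrite /mu; under [RHS]eq_bigr do rewrite scalerDl.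
  rewrite big_split /=.
  have -> : \sum_(j < N) ((1 - s) / N%:R) *: nth 0 T j = (1 - s) *: beta.
    by rewrite Eb scaler_sumr; apply: eq_bigr => j _; rewrite scalerA.
  under eq_bigr do rewrite scalerBr.
  rewrite sumrB -scaler_suml -/s scalerBl scale1r.
  by rewrite addrA [RHS]addrAC.
by rewrite Ey; apply: convT.
Qed.

End Relint.

Section Geo.
Variables (R : realType) (n : nat) (rs : seq 'rV[R]_n) (S : 'I_n -> 'rV[R]_n).
Hypothesis (Hrs : root_system rs) (HS : simple_system rs S).
Variable Lam : seq 'rV[R]_n.
Hypothesis HLam : forall l, l \in Lam -> chamber S l.
Notation V := 'rV[R]_n.
Notation O := (Worbit S Lam).
Notation P := (conv O).

Lemma refl_P a x : a \in rs -> P x -> P (refl a x).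
Proof.
move=> ha [k [c [p [Hp Hc Hs ->]]]]; rewrite refl_lincomb.
by exists k, c, (fun i => refl a (p i)); split => // i; exact: (O_root Hrs HS ha (Hp i)).
Qed.

Lemma refl_vertex a v : a \in rs -> vertex P v -> vertex P (refl a v).
Proof.
move=> ha [f [M [Hle [EF _]]]]; have a0 := root_neq0 Hrs ha.
have Pv : P v by have : [set v] v by []; rewrite EF => -[].
have Ev : dotp f v = M by have : [set v] v by []; rewrite EF => -[].
exists (refl a f), M; split.
  by move=> y Py; rewrite refl_sym; apply/Hle/refl_P.
split; last by exists (refl a v).
apply/seteqP; split => y /=.
  move=> ->; split; first exact: refl_P.
  by rewrite /= refl_sym reflK.
move=> [Py]; rewrite /= refl_sym => E.
have : [set v] (refl a y) by rewrite EF; split => //; apply: refl_P.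
by move=> /= <-; rewrite reflK.
Qed.

Lemma inW_vertex w v : inW S w -> vertex P v -> vertex P (w v).
Proof.
move=> Hw; elim: Hw v => [//|i w0 _ IH] v Vv /=.
by apply: refl_vertex; [apply: S_root|apply: IH].
Qed.

Lemma dot_ne0_lemma (c v a : V) : a != 0 -> dotp c (refl a v) = dotp c v ->
  dotp v a != 0 -> dotp c a = 0.
Proof.
move=> a0 E va; move: E; rewrite reflE dotpBr dotpZr => /eqP.
rewrite subr_eq addrC -subr_eq subrr eq_sym mulf_eq0 => /orP[|/eqP //].
rewrite mulf_eq0 invr_eq0 (gt_eqF (dotpxx_gt0 a0)) orbF mulf_eq0 pnatr_eq0 /=.
by rewrite (negbTE va).
Qed.

Lemma vertex_dot_ne0 v b : nondegenerate_poly S P -> vertex P v -> b \in rs ->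
  dotp v b != 0.
Proof.
move=> ND Vv hb; have [w [Hw [l [hl El]]]] := vertex_O Vv.
have [w' [Hw' Ew']] := inW_inv Hrs HS Hw.
have Vl : vertex P l by rewrite -(Ew' l) -El; apply: inW_vertex.
have [b' hb' Eb'] := inW_dot Hrs HS Hw hb.
rewrite El Eb'.
have pos : forall i, 0 < dotp l (S i).
  by move=> i; rewrite lt_def (ND l Vl (HLam hl) i) (HLam hl i).
have [Eb sg] := root_coef HS hb'.
have [i ci] : exists i, coef S b' i != 0.
  case: (pselect (exists i, coef S b' i != 0)) => // H; exfalso.
  have : b' = 0.
    rewrite Eb /lincomb big1 // => i _; case: (eqVneq (coef S b' i) 0) => [->|h].
      by rewrite scale0r.
    by exfalso; apply: H; exists i.
  by move/eqP; rewrite (negbTE (root_neq0 Hrs hb')).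
rewrite Eb /lincomb dotp_sumr (bigD1 i) //=.
case: sg => sg.
  apply: lt0r_neq0; apply: ltr_pwDl.
    rewrite dotpZr mulr_gt0 ?pos // lt0r sg andbT; exact: ci.
  by apply: sumr_ge0 => j _; rewrite dotpZr mulr_ge0 // ltW.
apply: ltr0_neq0; apply: ltr_nwDl.
  by rewrite dotpZr pmulr_llt0 ?pos // lt_neqAle ci sg.
by apply: sumr_le0 => j _; rewrite dotpZr mulr_le0_ge0 // ltW.
Qed.

End Geo.

Unset Implicit Arguments.

Theorem lemma2p2 (R : realType) (n : nat) (rs : seq 'rV[R]_n)
  (S : 'I_n -> 'rV[R]_n) (Lam : seq 'rV[R]_n)
  (Hrs : root_system rs) (HS : simple_system rs S)
  (HLam : forall l, l \in Lam -> chamber S l)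
  (Hfull : full_dim (conv (Worbit S Lam)))
  (F : set 'rV[R]_n) (HF : face (conv (Worbit S Lam)) F)
  (a : 'rV[R]_n) (Ha : a \in rs) :
  let P := conv (Worbit S Lam) in
  ((refl a @` F = F) <-> hyperplane a (barycenter P F)) /\
  (hyperplane a (barycenter P F) <-> exists x, relint F x /\ hyperplane a x) /\
  (nondegenerate_poly S P ->
     ((F `&` hyperplane a !=set0) <-> (refl a @` F = F)) /\
     ((refl a @` F = F) ->
        forall F' l, facet P F' -> F `<=` F' -> outward_normal P F' l ->
          dotp l a = 0)).
Proof.
move=> P.
have a0 : a != 0 := root_neq0 Hrs Ha.
have [Os [Ouniq HOs]] := finite_seq_uniq (O_finite Hrs HS Lam).
case: HF => c [b0 [Hle [EF [x0 Fx0]]]].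
have HO : forall o, Worbit S Lam o -> dotp c o <= b0.
  by move=> o Oo; exact: (Hle o (O_sub_P Oo)).
have HOs_le : forall o, o \in Os -> dotp c o <= b0 by move=> o /HOs; apply: HO.
have Fchar : forall y, F y <-> P y /\ dotp c y = b0 by move=> y; rewrite EF.
have Hex : exists2 o, o \in Os & dotp c o = b0.
  have [Px0 E0] := (Fchar x0).1 Fx0.
  by have [o [Oo Eo]] := conv_exists_eq HO Px0 E0; exists o => //; apply/HOs.
have rO : forall o, Worbit S Lam o -> Worbit S Lam (refl a o).
  by move=> o; exact: (O_root Hrs HS Ha).
have rP : forall y, P y -> P (refl a y) by move=> y; exact: (refl_P Hrs HS Ha).
have rc : forall y, dotp (refl a c) y = dotp c (refl a y) by move=> y; rewrite refl_sym.
pose I1 := forall y, F y -> F (refl a y).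
have inv_eq : (refl a @` F = F) <-> I1.
  split => [E y Fy|H]; first by rewrite -E; exists y.
  apply/seteqP; split => y /=; first by move=> [z Fz <-]; apply: H.
  by move=> Fy; exists (refl a y); [apply: H | rewrite reflK].
have rT : forall t, t \in Os -> dotp c t = b0 -> I1 ->
    refl a t \in Os /\ dotp c (refl a t) = b0.
  move=> t ts Et H; split; first by apply/HOs/rO/HOs.
  have : F (refl a t) by apply: H; apply/Fchar; split => //; apply/O_sub_P/HOs.
  by case/Fchar.
have step13 : I1 -> exists x, relint F x /\ hyperplane a x.
  move=> H.
  have NT : (0 < size [seq o <- Os | dotp c o == b0])%N.
    case: Hex => o os Eo; rewrite -has_predT; apply/hasP; exists o => //.
    by rewrite mem_filter os Eo eqxx.
  have := relint_bary HOs Hle EF NT.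
  set T := [seq o <- Os | dotp c o == b0]; set beta := _ *: _ => Hb.
  exists beta; split => //; rewrite /hyperplane /=; apply: (refl_fixP a0).
  rewrite /beta reflZ refl_sum -(big_map (refl a) xpredT id); congr (_ *: _).
  apply: perm_big; apply: uniq_perm.
  - by rewrite map_inj_uniq ?filter_uniq //; apply: (can_inj (reflK a0)).
  - by rewrite filter_uniq.
  move=> x; apply/mapP/idP => [[t tT ->]|xT].
    move: tT; rewrite !mem_filter => /andP[/eqP Et ts].
    by have [h1 h2] := rT t ts Et H; rewrite h2 eqxx h1.
  exists (refl a x); last by rewrite reflK.
  move: xT; rewrite !mem_filter => /andP[/eqP Et ts].
  by have [h1 h2] := rT x ts Et H; rewrite h2 eqxx h1.
have step31 : (exists x, relint F x /\ hyperplane a x) -> I1.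
  move=> [x [[Fx [eps [eps0 Heps]]] Hx]] y Fy.
  have [Py Ey] := (Fchar y).1 Fy; have [Px Ex] := (Fchar x).1 Fx.
  apply/Fchar; split; first exact: rP.
  apply/le_anti/andP; split; first exact: Hle (rP _ Py).
  set d := dotp (y - x) (y - x).
  have d0 : 0 <= d by apply: dotpxx_ge0.
  set t := eps / (d + eps).
  have t0 : 0 < t by rewrite /t divr_gt0 // ltr_wpDl.
  have t1 : t <= 1 by rewrite /t ler_pdivrMr ?mul1r ?lerDr // ltr_wpDl.
  have td : t * d < eps.
    rewrite /t mulrAC ltr_pdivrMr ?ltr_wpDl // ltr_pM2l // ltrDl //.
  pose z := (1 + t) *: x - t *: y.
  have Fz : F z.
    apply: Heps.
      exists 2%N, (fun i : 'I_2 => if i == ord0 then 1 + t else - t),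
        (fun i : 'I_2 => if i == ord0 then x else y); split.
      + by case=> -[|[|]] //.
      + by rewrite big_ord_recl big_ord1 /=; ring.
      + by rewrite /lincomb big_ord_recl big_ord1 /= scaleNr.
    have -> : z - x = t *: (x - y).
      by rewrite /z scalerBr scalerDl scale1r addrAC [x + _]addrC addrK.
    rewrite dotpZl dotpZr.
    have -> : dotp (x - y) (x - y) = d by rewrite /d -opprB dotpNl dotpNr opprK.
    rewrite mulrA; apply: le_lt_trans td.
    by rewrite -expr2 ler_wpM2r // expr2 ler_piMl // ltW.
  have := Hle _ (rP _ ((Fchar z).1 Fz).1).
  rewrite /z reflB !reflZ (refl_fix Hx) dotpBr !dotpZr Ex.
  move=> h; have : t * b0 <= t * dotp c (refl a y) by lra.
  by rewrite ler_pM2l.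
have finVF : finite_set (vertices_of P F).
  apply: (sub_finite_set (B := Worbit S Lam)); last exact: (O_finite Hrs HS Lam).
  by move=> v [Vv _]; apply: vertex_O.
have memvs : forall v, (v \in finmap.enum_fset (fset_set (vertices_of P F))) <-> vertex P v /\ F v.
  move=> v; have E : (v \in finmap.enum_fset (fset_set (vertices_of P F))) =
    (v \in vertices_of P F) := in_fset_set finVF v.
  by rewrite E; split => [/set_mem|/mem_set].
have bary : barycenter P F =
    (\sum_(v <- finmap.enum_fset (fset_set (vertices_of P F))) (1:R))^-1 *:
      \sum_(v <- finmap.enum_fset (fset_set (vertices_of P F))) v.
  by rewrite /barycenter !fsbig_finite.
have rv : I1 -> forall v, v \in finmap.enum_fset (fset_set (vertices_of P F)) ->
    refl a v \in finmap.enum_fset (fset_set (vertices_of P F)).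
  move=> H v /memvs [Vv Fv]; apply/memvs; split; last exact: H.
  exact: (refl_vertex Hrs HS Ha Vv).
have step12 : I1 -> hyperplane a (barycenter P F).
  move=> H; rewrite /hyperplane /= bary; apply: (refl_fixP a0).
  rewrite reflZ refl_sum -(big_map (refl a) xpredT id); congr (_ *: _).
  apply: perm_big; apply: uniq_perm.
  - by rewrite map_inj_uniq ?finmap.fset_uniq //; apply: (can_inj (reflK a0)).
  - exact: finmap.fset_uniq.
  move=> x; apply/mapP/idP => [[v vv ->]|xv]; first exact: rv.
  by exists (refl a x); [apply: rv | rewrite reflK].
have step21 : hyperplane a (barycenter P F) -> I1.
  rewrite /hyperplane /= bary => Hb.
  set vs := finmap.enum_fset (fset_set (vertices_of P F)) in memvs Hb *.
  set X := \sum_(v <- vs) v in Hb *; set Nv := \sum_(v <- vs) (1:R) in Hb *.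
  have [v [Vv vs_ Ev Hmin]] := @vertex_min _ _ _ _ HOs c b0 (refl a c) HOs_le Hex.
  have Fv : F v by apply/Fchar; split => //; apply/O_sub_P/HOs.
  have vvs : v \in vs by apply/memvs.
  have Nv0 : Nv != 0.
    rewrite /Nv (big_rem v vvs) /=; apply: lt0r_neq0; apply: ltr_pwDl => //.
    exact: sumr_ge0.
  have rX : refl a X = X.
    have := refl_fix Hb; rewrite reflZ => /(congr1 (fun u => Nv *: u)).
    by rewrite !scalerA mulfV // !scale1r.
  have Ssum : \sum_(w <- vs) dotp (refl a c) w = \sum_(w <- vs) b0.
    rewrite -dotp_sumr rc rX dotp_sumr; apply: eq_big_seq => w /memvs [_ /Fchar [_ ->]].
    by [].
  have le : forall w, w \in vs -> dotp (refl a c) w <= b0.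
    by move=> w /memvs [_ /Fchar [Pw _]]; rewrite rc; apply/Hle/rP.
  have Ecv : dotp (refl a c) v = b0.
    have : \sum_(w <- vs | w \in vs) (b0 - dotp (refl a c) w) = 0.
      by rewrite -big_seq sumrB Ssum subrr.
    move/eqP; rewrite psumr_eq0; last by move=> w /le; rewrite subr_ge0.
    move/allP/(_ v vvs); rewrite vvs /= subr_eq0 => /eqP ->; by [].
  move=> y Fy; have [Py Ey] := (Fchar y).1 Fy; apply/Fchar; split; first exact: rP.
  apply/le_anti/andP; split; first exact: Hle (rP _ Py).
  rewrite -rc; move: Py Ey => [k [l [q [Hq Hl Hs Eq]]]] Ey.
  rewrite Eq dotp_lincomb -[b0]mul1r -Hs mulr_suml; apply: ler_sum => i _.
  case: (eqVneq (l i) 0) => [->|li]; first by rewrite !mul0r.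
  apply: ler_wpM2l => //; rewrite -Ecv; apply: Hmin; first exact/HOs.
  by apply: (conv_eq HO Hq Hl Hs _); rewrite ?lt0r ?li ?Hl // -Eq.
split.
  split => [/inv_eq|h]; first exact: step12.
  by apply/inv_eq; apply: step21.
split.
  by split => h; [apply: step13; apply: step21 | apply: step12; apply: step31].
move=> ND; split.
  split => [[x [Fx Hx]]|/inv_eq h]; last first.
    by have [x [[Fx _] Hx]] := step13 h; exists x.
  apply/inv_eq; rewrite /hyperplane /= in Hx.
  set f := c + refl a c.
  have Hf : forall o, Worbit S Lam o -> dotp f o <= b0 + b0.
    by move=> o Oo; rewrite dotpDl rc; apply: lerD; apply: HO => //; apply: rO.
  have [Px Ex] := (Fchar x).1 Fx.
  have Efx : dotp f x = b0 + b0 by rewrite dotpDl rc (refl_fix Hx) Ex.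
  have [o [Oo Eo]] := conv_exists_eq Hf Px Efx.
  have [v [Vv vs_ Ev]] := vertex_exists HOs (f := f) (M := b0 + b0)
    (fun o os => Hf o ((HOs o).2 os)) (ex_intro2 _ _ o ((HOs o).1 Oo) Eo).
  have [E1 E2] : dotp c v = b0 /\ dotp c (refl a v) = b0.
    have h1 := HOs_le v vs_.
    have h2 : dotp c (refl a v) <= b0 by apply: HO; apply/rO/HOs.
    move: Ev; rewrite dotpDl rc => Ev; split; lra.
  have ca : dotp c a = 0.
    exact: (dot_ne0_lemma a0 (etrans E2 (esym E1)) (vertex_dot_ne0 Hrs HS HLam ND Vv Ha)).
  have rc' : refl a c = c := refl_fix ca.
  move=> y Fy; have [Py Ey] := (Fchar y).1 Fy; apply/Fchar; split; first exact: rP.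
  by rewrite -rc rc'.
move=> /inv_eq H F' l _ FF' [l0 [b1 [Hl EF']]].
have [v [Vv vs_ Ev _]] := @vertex_min _ _ _ _ HOs c b0 c HOs_le Hex.
have Fv : F v by apply/Fchar; split => //; apply/O_sub_P/HOs.
have : F' v by apply: FF'.
have : F' (refl a v) by apply/FF'/H.
rewrite EF' => -[_ E2] [_ E1].
exact: (dot_ne0_lemma a0 (etrans E2 (esym E1)) (vertex_dot_ne0 Hrs HS HLam ND Vv Ha)).
Qed.
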